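(* Let $\mathcal{P}^d=(\mathcal{D},\varphi,\mathcal{E})$ be a trembling-hand problem for $\mathrm{LTL}_f$ planning in a deterministic domain $\mathcal{D}=(S,s_0,A,F_d,L)$, let $\mathcal{M}$ be the MDP constructed from it, let $\mathcal{M}^\times=\mathcal{M}\times Aut_\varphi$ be the product MDP with goal set $G$ (see context). If $\sigma_m^*$ is an optimal strategy of $\mathcal{M}^\times$ for reaching $G$ (i.e., it maximizes the probability of eventually visiting $G$), then the strategy $\sigma_p^*$ on $\mathcal{D}$ defined by $\sigma_p^*(\rho)=\sigma_m^*(\rho^\times)$ for every finite path $\rho$ of $\mathcal{D}$ is an optimal strategy for $\mathcal{P}^d$.
   Context: $\mathrm{LTL}_f$ is linear temporal logic on finite nonempty traces over propositions $Prop$. For $\varphi$ let $Aut_\varphi=(2^{Prop},Q,q_0,\delta,acc)$ be a DFA accepting exactly the finite traces satisfying $\varphi$. A deterministic domain $\mathcal{D}=(S,s_0,A,F_d,L)$: finite states $S$, initial $s_0$, finite actions $A$, applicable actions $A(s)\subseteq A$ (nonempty), successor $F_d(s,a)$ for $a\in A(s)$, labelling $L:S\to2^{Prop}$. Finite paths are alternating sequences $s_0a_0s_1\cdots s_k$ with $a_i\in A(s_i)$; an agent strategy maps finite paths to actions applicable at the last state. Errors $\mathcal{E}=\{err(s,a)\}$: for $s\in S,a\in A(s)$, $err(s,a)$ is a distribution over $A(s)$ (probability of actually instructing $a'$ when intending $a$). Given strategy $\sigma_p$, perturbed paths are sequences $(s_0,a_0,a_0')(s_1,a_1,a_1')\cdots$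 with $a_i=\sigma_p(s_0a_0\cdots a_{i-1}s_i)$, $a_i'$ drawn from $err(s_i,a_i)$, $s_{i+1}=F_d(s_i,a_i')$. $\Pr_{\mathcal{D}}^{\sigma_p,\mathcal{E}}(\varphi)$ is the probability that some $k\ge0$ has $L(s_0)\cdots L(s_k)\models\varphi$; a strategy maximizing it is optimal for $\mathcal{P}^d$. Constructed MDP $\mathcal{M}=(S,s_0,A,\mathcal{T},L)$: same states, actions, applicability and labels as $\mathcal{D}$, with $\mathcal{T}(s,a,s')=\sum_{a'\in A(s):F_d(s,a')=s'}err(s,a)(a')$. Product MDP $\mathcal{M}^\times$: states $S\times Q$, initial state $(s_0,\delta(q_0,L(s_0)))$, actions applicable at $(s,q)$ are $A(s)$, and $\mathcal{T}^\times((s,q),a,(s',q'))=\mathcal{T}(s,a,s')$ if $q'=\delta(q,L(s'))$ and $0$ otherwise. Goal set $G=\{(s,q): q\in acc\}$. Strategies of $\mathcal{M}^\times$ are functions from its finite paths to applicable actions. For a finite path $\rho=s_0a_0s_1\cdots s_k$ of $\mathcal{D}$, $\rho^\times=(s_0,q_0')a_0(s_1,q_1')\cdots(s_k,q_k')$ where $q_0'=\delta(q_0,L(s_0))$ and $q_{i+1}'=\delta(q_i',L(s_{i+1}))$. *)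

(* Defs.v *)
From HB Require Import structures.
From mathcomp Require Import all_boot all_order all_algebra.
From mathcomp Require Import boolp classical_sets reals.
Set Implicit Arguments. Unset Strict Implicit. Unset Printing Implicit Defensive.
Import Order.TTheory GRing.Theory Num.Theory.
Local Open Scope ring_scope.

Inductive ltlf (P : Type) : Type :=
  | LTrue
  | LAtom of P
  | LNot of ltlf P
  | LAnd of ltlf P & ltlf P
  | LNext of ltlf P                 (* strong next *)
  | LUntil of ltlf P & ltlf P.

Fixpoint holds (P : finType) (w : seq {set P}) (i : nat) (f : ltlf P) : bool :=
  match f with
  | LTrue => true
  | LAtom p => p \in nth (@finset.set0 P) w i
  | LNot g => ~~ holds w i g
  | LAnd g h => holds w i g && holds w i h
  | LNext g => (i.+1 < size w)%N && holds w i.+1 g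
  | LUntil g h =>
      [exists j : 'I_(size w),
         [&& (i <= j)%N, holds w j h &
             [forall k : 'I_(size w), ((i <= k)%N && (k < j)%N) ==> holds w k g]]]
  end.

Definition ltlf_sat (P : finType) (f : ltlf P) (w : seq {set P}) : bool :=
  (0 < size w)%N && holds w 0 f.

Definition dfa_of (P Q : finType) (q0 : Q) (delta : Q -> {set P} -> Q)
  (acc : {set Q}) (f : ltlf P) : Prop :=
  forall w : seq {set P}, (0 < size w)%N ->
    (foldl delta q0 w \in acc) = ltlf_sat f w.

(* A finite path x0 a0 x1 ... xk starting at the initial state x0 is encoded by
   x0 and the list [:: (a0,x1); ...; (a_{k-1},xk)].                        *)
Fixpoint path_ok (X : Type) (A : finType) (act : X -> {set A}) (x : X)
    (h : seq (A * X)) : Prop :=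
  match h with
  | [::] => True
  | (a, x') :: r => a \in act x /\ path_ok act x' r
  end.

Definition last_state (X A : Type) (x0 : X) (h : seq (A * X)) : X :=
  last x0 (map snd h).

Definition strategy_ok (X : Type) (A : finType) (act : X -> {set A}) (x0 : X)
    (sigma : seq (A * X) -> A) : Prop :=
  forall h, path_ok act x0 h -> sigma h \in act (last_state x0 h).

Section Reach.
Variables (R : realType) (X A : finType).
Variables (T : X -> A -> X -> R) (G : {set X}) (sigma : seq (A * X) -> A).

(* probability, from history h currently at state x, of visiting G within n
   further steps (G counts if already visited at x) *)
Fixpoint reachN (n : nat) (h : seq (A * X)) (x : X) : R :=
  if x \in G then 1 else
  match n with
  | 0 => 0
  | n'.+1 => \sum_(x' : X) T x (sigma h) x' * reachN n' (rcons h (sigma h, x')) x'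
  end.
End Reach.

(* probability of eventually visiting G: the increasing limit (= supremum) of the
   probabilities of visiting G within n steps *)
Definition reach_prob (R : realType) (X A : finType) (T : X -> A -> X -> R)
    (G : {set X}) (x0 : X) (sigma : seq (A * X) -> A) : R :=
  sup (range (fun n => reachN T G sigma n [::] x0)).

Definition mdp_optimal (R : realType) (X A : finType) (act : X -> {set A})
    (T : X -> A -> X -> R) (G : {set X}) (x0 : X) (sigma : seq (A * X) -> A) : Prop :=
  strategy_ok act x0 sigma /\
  forall sigma', strategy_ok act x0 sigma' ->
    reach_prob T G x0 sigma' <= reach_prob T G x0 sigma.

Definition errors_ok (R : realType) (S A : finType) (Aapp : S -> {set A})
    (err : S -> A -> A -> R) : Prop :=
  forall s a, a \in Aapp s ->
    [/\ forall a', 0 <= err s a a',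
        forall a', a' \notin Aapp s -> err s a a' = 0
      & \sum_(a' : A) err s a a' = 1].

Definition dtrace (S A P : finType) (L : S -> {set P}) (s0 : S)
    (h : seq (A * S)) : seq {set P} :=
  L s0 :: map (fun p => L p.2) h.

Section Trembling.
Variables (R : realType) (S A P : finType).
Variables (s0 : S) (F_d : S -> A -> S) (L : S -> {set P}).
Variables (err : S -> A -> A -> R) (phi : ltlf P) (sigma : seq (A * S) -> A).

(* Perturbed executions: at the current path rho (intended actions), with last
   state s, the agent intends a = sigma rho, the action a' actually performed is
   drawn from err s a, and the next state is F_d s a'.  [trembleN n rho] is the
   probability that, continuing from rho for at most n more steps, some prefix
   trace L(s0)...L(sk) satisfies phi (checking already at rho itself). *)
Fixpoint trembleN (n : nat) (rho : seq (A * S)) : R :=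
  if ltlf_sat phi (dtrace L s0 rho) then 1 else
  match n with
  | 0 => 0
  | n'.+1 =>
      let s := last_state s0 rho in
      let a := sigma rho in
      \sum_(a' : A) err s a a' * trembleN n' (rcons rho (a, F_d s a'))
  end.
End Trembling.

Definition tremble_prob (R : realType) (S A P : finType) (s0 : S)
    (F_d : S -> A -> S) (L : S -> {set P}) (err : S -> A -> A -> R)
    (phi : ltlf P) (sigma : seq (A * S) -> A) : R :=
  sup (range (fun n => trembleN s0 F_d L err phi sigma n [::])).

Definition trembling_optimal (R : realType) (S A P : finType) (s0 : S)
    (Aapp : S -> {set A}) (F_d : S -> A -> S) (L : S -> {set P})
    (err : S -> A -> A -> R) (phi : ltlf P) (sigma : seq (A * S) -> A) : Prop :=
  strategy_ok Aapp s0 sigma /\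
  forall sigma', strategy_ok Aapp s0 sigma' ->
    tremble_prob s0 F_d L err phi sigma' <= tremble_prob s0 F_d L err phi sigma.

Definition mdpT (R : realType) (S A : finType) (Aapp : S -> {set A})
    (F_d : S -> A -> S) (err : S -> A -> A -> R) (s : S) (a : A) (s' : S) : R :=
  \sum_(a' in Aapp s | F_d s a' == s') err s a a'.

Definition prodT (R : realType) (S A P Q : finType) (Aapp : S -> {set A})
    (F_d : S -> A -> S) (L : S -> {set P}) (err : S -> A -> A -> R)
    (delta : Q -> {set P} -> Q) (x : S * Q) (a : A) (x' : S * Q) : R :=
  if x'.2 == delta x.2 (L x'.1) then mdpT Aapp F_d err x.1 a x'.1 else 0.

Definition prodAct (S A Q : finType) (Aapp : S -> {set A}) (x : S * Q) : {set A} :=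
  Aapp x.1.

Definition prodInit (S P Q : finType) (s0 : S) (L : S -> {set P}) (q0 : Q)
    (delta : Q -> {set P} -> Q) : S * Q := (s0, delta q0 (L s0)).

Definition prodGoal (S Q : finType) (acc : {set Q}) : {set S * Q} :=
  [set x | x.2 \in acc].

Fixpoint lift_path (S A P Q : finType) (L : S -> {set P})
    (delta : Q -> {set P} -> Q) (q : Q) (rho : seq (A * S)) : seq (A * (S * Q)) :=
  match rho with
  | [::] => [::]
  | (a, s') :: r => let q' := delta q (L s') in (a, (s', q')) :: lift_path L delta q' r
  end.

(* Main.v *)
Require Import Defs.
From mathcomp Require Import all_boot all_order all_algebra.
From mathcomp Require Import boolp classical_sets reals.
Set Implicit Arguments. Unset Strict Implicit. Unset Printing Implicit Defensive.
Import Order.TTheory GRing.Theory Num.Theory.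
Local Open Scope ring_scope.

Section Aux.
Variables (R : realType) (S A P Q : finType).
Variables (s0 : S) (Aapp : S -> {set A}) (F_d : S -> A -> S) (L : S -> {set P}).
Variables (err : S -> A -> A -> R) (phi : ltlf P).
Variables (q0 : Q) (delta : Q -> {set P} -> Q) (acc : {set Q}).

Definition qlast (q : Q) (rho : seq (A * S)) := foldl delta q (map (fun p => L p.2) rho).

Lemma lift_rcons q rho a s' :
  lift_path L delta q (rcons rho (a, s')) =
  rcons (lift_path L delta q rho) (a, (s', delta (qlast q rho) (L s'))).
Proof. by elim: rho q => [|[b t] r IH] q //=; rewrite IH. Qed.

Lemma qlast_rcons q rho a s' : qlast q (rcons rho (a, s')) = delta (qlast q rho) (L s').
Proof. by rewrite /qlast map_rcons foldl_rcons. Qed.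

Lemma last_lift q s rho :
  last_state (s, q) (lift_path L delta q rho) = (last_state s rho, qlast q rho).
Proof. by elim: rho s q => [|[b t] r IH] s q //=; rewrite /last_state /= -IH. Qed.

Lemma path_ok_lift q s rho :
  path_ok Aapp s rho -> path_ok (prodAct (Q:=Q) Aapp) (s, q) (lift_path L delta q rho).
Proof.
by elim: rho s q => [|[b t] r IH] s q //= [H1 H2]; split => //; apply: IH.
Qed.

Definition proj (h : seq (A * (S * Q))) : seq (A * S) := map (fun p => (p.1, p.2.1)) h.

Lemma proj_lift q rho : proj (lift_path L delta q rho) = rho.
Proof. by elim: rho q => [|[b t] r IH] q //=; rewrite IH. Qed.

Lemma path_ok_proj x h :
  path_ok (prodAct (Q:=Q) Aapp) x h -> path_ok Aapp x.1 (proj h).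
Proof.
by elim: h x => [|[b t] r IH] x //= [H1 H2]; split => //; apply: IH.
Qed.

Lemma last_proj x h : (last_state x h).1 = last_state x.1 (proj h).
Proof.
by elim: h x => [|[b t] r IH] x //=; rewrite /last_state /= -/(last_state _ _) IH.
Qed.

Lemma path_ok_rcons (X : Type) (act : X -> {set A}) x h a x' :
  path_ok act x h -> a \in act (last_state x h) -> path_ok act x (rcons h (a, x')).
Proof.
elim: h x => [|[b t] r IH] x /=; first by move=> _ H; split.
move=> [H1 H2] H; split => //; exact: IH.
Qed.

Variables (tau : seq (A * (S * Q)) -> A) (sig : seq (A * S) -> A).
Hypothesis err_ok : errors_ok Aapp err.
Hypothesis aut_ok : dfa_of q0 delta acc phi.
Hypothesis Htau : forall rho, path_ok Aapp s0 rho ->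
  tau (lift_path L delta (delta q0 (L s0)) rho) = sig rho /\
  sig rho \in Aapp (last_state s0 rho).

Lemma key n rho : path_ok Aapp s0 rho ->
  reachN (prodT Aapp F_d L err delta) (prodGoal S acc) tau n
    (lift_path L delta (delta q0 (L s0)) rho)
    (last_state s0 rho, qlast (delta q0 (L s0)) rho)
  = trembleN s0 F_d L err phi sig n rho.
Proof.
set q1 := delta q0 (L s0).
elim: n rho => [|n IH] rho Hp.
- rewrite /= /prodGoal inE /= -aut_ok //=.
- rewrite /= /prodGoal inE /= -aut_ok //=.
  case: ifP => // _.
  have [Ht Ha] := Htau Hp.
  rewrite Ht.
  set s := last_state s0 rho; set a := sig rho; set qr := qlast q1 rho.
  set g := fun s' => reachN (prodT Aapp F_d L err delta) (prodGoal S acc) tau n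
       (rcons (lift_path L delta q1 rho) (a, (s', delta qr (L s')))) (s', delta qr (L s')).
  transitivity (\sum_(a' : A) err s a a' * g (F_d s a')); last first.
    apply: eq_bigr => a' _; rewrite -IH; last first.
      by apply: path_ok_rcons.
    by rewrite lift_rcons qlast_rcons /last_state map_rcons last_rcons.
  rewrite (eq_bigr (fun x' => (fun s' q' => prodT Aapp F_d L err delta (s, qr) a (s', q') *
     reachN (prodT Aapp F_d L err delta) (prodGoal S acc) tau n
       (rcons (lift_path L delta q1 rho) (a, (s', q'))) (s', q')) x'.1 x'.2)); last by move=> [].
  rewrite -(pair_bigA _ (fun s' q' => prodT Aapp F_d L err delta (s, qr) a (s', q') *
     reachN (prodT Aapp F_d L err delta) (prodGoal S acc) tau n
       (rcons (lift_path L delta q1 rho) (a, (s', q'))) (s', q'))) /=.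
  transitivity (\sum_(s' : S) mdpT Aapp F_d err s a s' * g s').
    apply: eq_bigr => s' _.
    rewrite (bigD1 (delta qr (L s'))) //= big1 ?addr0.
      by rewrite /prodT /= eqxx.
    by move=> q' /negPf Hq; rewrite /prodT /= Hq mul0r.
  have [_ H0 _] := err_ok Ha.
  rewrite [RHS](bigID (fun a' => a' \in Aapp s)) /= [X in _ + X]big1 ?addr0; last first.
    by move=> a' /H0 ->; rewrite mul0r.
  rewrite (partition_big (fun a' => F_d s a') xpredT) //=.
  apply: eq_bigr => s' _; rewrite /mdpT big_distrl /=.
  by apply: eq_bigr => a' /andP [_ /eqP ->].
Qed.
End Aux.

Theorem theorem2 (R : realType) (S A P Q : finType)
    (s0 : S) (Aapp : S -> {set A}) (F_d : S -> A -> S) (L : S -> {set P})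
    (err : S -> A -> A -> R) (phi : ltlf P)
    (q0 : Q) (delta : Q -> {set P} -> Q) (acc : {set Q})
    (Aapp_nonempty : forall s, exists a, a \in Aapp s)
    (err_ok : errors_ok Aapp err)
    (aut_ok : dfa_of q0 delta acc phi)
    (sigma_m : seq (A * (S * Q)) -> A)
    (sigma_m_opt : mdp_optimal (prodAct (Q:=Q) Aapp) (prodT Aapp F_d L err delta)
                     (prodGoal S acc) (prodInit s0 L q0 delta) sigma_m) :
  trembling_optimal s0 Aapp F_d L err phi
    (fun rho => sigma_m (lift_path L delta (delta q0 (L s0)) rho)).
Proof.
have [Hsm Hopt] := sigma_m_opt.
have Hok : strategy_ok Aapp s0
    (fun rho => sigma_m (lift_path L delta (delta q0 (L s0)) rho)).
  move=> rho Hp.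
  have := Hsm _ (path_ok_lift L delta (delta q0 (L s0)) Hp).
  by rewrite /prodInit last_lift.
split => // sigma' Hs'.
pose tau := fun h : seq (A * (S * Q)) => sigma' (proj h).
have Htau : strategy_ok (prodAct (Q:=Q) Aapp) (prodInit s0 L q0 delta) tau.
  move=> h Hp; rewrite /tau /prodAct last_proj.
  exact: Hs' _ (path_ok_proj Hp).
have E1 : tremble_prob s0 F_d L err phi sigma' =
          reach_prob (prodT Aapp F_d L err delta) (prodGoal S acc)
            (prodInit s0 L q0 delta) tau.
  rewrite /tremble_prob /reach_prob; apply: f_equal; apply: f_equal.
  apply: funext => n.
  have HT : forall rho, path_ok Aapp s0 rho ->
    tau (lift_path L delta (delta q0 (L s0)) rho) = sigma' rho /\ sigma' rho \in Aapp (last_state s0 rho).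
    by move=> rho Hp; rewrite /tau proj_lift; split => //; apply: Hs'.
  have K := key (tau := tau) (sig := sigma') F_d err_ok aut_ok HT n (rho:=[::]) I.
  exact: (esym K).
have E2 : tremble_prob s0 F_d L err phi
     (fun rho => sigma_m (lift_path L delta (delta q0 (L s0)) rho)) =
          reach_prob (prodT Aapp F_d L err delta) (prodGoal S acc)
            (prodInit s0 L q0 delta) sigma_m.
  rewrite /tremble_prob /reach_prob; apply: f_equal; apply: f_equal.
  apply: funext => n.
  have HT : forall rho, path_ok Aapp s0 rho ->
    sigma_m (lift_path L delta (delta q0 (L s0)) rho) = sigma_m (lift_path L delta (delta q0 (L s0)) rho) /\
    sigma_m (lift_path L delta (delta q0 (L s0)) rho) \in Aapp (last_state s0 rho).
    by move=> rho Hp; split => //; apply: Hok.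
  have K := key (tau := sigma_m) (sig := fun rho => sigma_m (lift_path L delta (delta q0 (L s0)) rho)) F_d err_ok aut_ok HT n (rho:=[::]) I.
  exact: (esym K).
by rewrite E1 E2; apply: Hopt.
Qed.
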